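(* Let $(X_n)_{n\ge1}$ be a sequence of finite sets with $X_1=\emptyset$ and $|X_p|=p$ for every prime $p$, and for each $n\ge1$ let the cyclic group $\mathbb{Z}_n$ act on $X_n$ in such a way that $|X_n^i|=|X_{\gcd(s_n,i)}|$ for all $n,i\ge1$ (where $i$ acts through its residue modulo $n$). Then for every $n\ge1$ the triple $(X_n,\mathbb{Z}_n,S_n(q))$ exhibits the cyclic sieving phenomenon. The same holds with $s_n$ replaced by $g_n$ and $S_n(q)$ replaced by $G_n(q)$.
   Context: $\Phi_k(q)$ is the $k$-th cyclotomic polynomial. Set $s_1=g_1=0$, and for $n>1$ let $s_n$ be the smallest prime factor of $n$ and $g_n$ the greatest prime factor of $n$. Define $S_1(q)=G_1(q)=\Phi_1(q)=q-1$ and, for $n>1$, $S_n(q)=\Phi_{s_n}(q^{n/s_n})$, $G_n(q)=\Phi_{g_n}(q^{n/g_n})$. $X_n^i$ denotes the set of points of $X_n$ fixed by $i\in\mathbb{Z}_n$ (the additive group of integers modulo $n$). A triple $(X,\mathbb{Z}_n,f(q))$ with $f(q)\in\mathbb{Z}[q]$ exhibits the cyclic sieving phenomenon if $|X^i|=f(\omega_n^i)$ for all $i\in\mathbb{Z}_n$, where $\omega_n$ is a primitive $n$-th root of unity. *)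

(* Defs.v *)
From mathcomp Require Import all_boot all_order all_algebra all_field.
Set Implicit Arguments. Unset Strict Implicit. Unset Printing Implicit Defensive.
Import GRing.Theory Num.Theory.
Local Open Scope ring_scope.

Definition s_ (n : nat) : nat := if (n <= 1)%N then 0%N else pdiv n.
Definition g_ (n : nat) : nat := if (n <= 1)%N then 0%N else max_pdiv n.

Definition S_poly (n : nat) : {poly int} :=
  if (n <= 1)%N then 'X - 1 else ('Phi_(s_ n)) \Po 'X^(n %/ s_ n).
Definition G_poly (n : nat) : {poly int} :=
  if (n <= 1)%N then 'X - 1 else ('Phi_(g_ n)) \Po 'X^(n %/ g_ n).

(* An action of the cyclic group Z_n on a finite set T, given by the
   action of the integers i (acting through their residue mod n). *)
Definition Zn_action (n : nat) (T : finType) (a : nat -> T -> T) : Prop :=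
  [/\ forall x, a 0%N x = x,
      forall i j x, a (i + j)%N x = a i (a j x)
    & forall x, a n x = x].

Definition fixpts (T : finType) (a : nat -> T -> T) (i : nat) : {set T} :=
  [set x | a i x == x].

Definition CSP (n : nat) (T : finType) (a : nat -> T -> T) (f : {poly int}) :
  Prop :=
  forall (w : algC), n.-primitive_root w ->
    forall i : nat, (i < n)%N ->
      (#|fixpts a i|%:R : algC) = (map_poly intr f).[w ^+ i].

(* Main.v *)
Require Import Defs.
From mathcomp Require Import all_boot all_order all_algebra all_field.
Import GRing.Theory Num.Theory.
Local Open Scope ring_scope.

Lemma divisors_prime p : prime p -> divisors p = [:: 1%N; p].
Proof.
move=> pp; have p0 := prime_gt0 pp.
apply: (sorted_eq (leT:=leq)) => //.
- exact: leq_trans.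
- exact: anti_leq.
- exact: sorted_divisors.
- by rewrite /= andbT prime_gt0.
apply: uniq_perm; first exact: divisors_uniq.
  by rewrite /= inE andbT neq_ltn prime_gt1.
move=> d; rewrite -dvdn_divisors // !inE.
apply/idP/idP; first by case/primeP: pp => _ H /H.
by case/orP=> /eqP ->.
Qed.

Lemma Phi_prime_sum p : prime p ->
  map_poly intr 'Phi_p = \sum_(k < p) 'X^k :> {poly algC}.
Proof.
move=> pp; have p0 := prime_gt0 pp.
have := prod_Cyclotomic p0; rewrite divisors_prime // big_cons big_seq1.
move/(congr1 (map_poly (intr : int -> algC))).
rewrite rmorphM rmorphB rmorph1 /= map_polyXn.
have [z pz] := C_prim_root_exists p0.
have z1 := dvdn_prim_root pz (dvd1n p).
rewrite (Cintr_Cyclotomic z1) /cyclotomic big_mkcond big_ord1 /= expr0.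
rewrite subrX1 polyC1 => H.
apply: (mulfI (x := 'X - 1)); last first.
  by rewrite H.
by rewrite -polyC1 polyXsubC_eq0.
Qed.

Lemma eval_key n p (w : algC) i : prime p -> (p %| n)%N -> n.-primitive_root w ->
 (map_poly intr ('Phi_p \Po 'X^(n %/ p))).[w ^+ i] = (if p %| i then p else 0)%N%:R.
Proof.
move=> pp pn pw.
have n0 := prim_order_gt0 pw; have p0 := prime_gt0 pp.
have np0 : (0 < n %/ p)%N by rewrite divn_gt0 // dvdn_leq.
rewrite map_comp_poly horner_comp map_polyXn hornerXn Phi_prime_sum // horner_sum.
under eq_bigr do rewrite hornerXn.
set y := (w ^+ i) ^+ (n %/ p).
have yp : y ^+ p = 1.
  by rewrite /y -!exprM divnK // mulnC exprM (prim_expr_order pw) expr1n.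
have y1 : (y == 1) = (p %| i)%N.
  rewrite /y -exprM -(prim_order_dvd pw) -{1}(divnK pn) mulnC.
  by rewrite dvdn_pmul2r.
case: ifP => hpi.
  move: y1; rewrite hpi => /eqP ->.
  by under eq_bigr do rewrite expr1n; rewrite sumr_const card_ord.
apply: (mulfI (x := y - 1)); first by rewrite subr_eq0 y1 hpi.
by rewrite -subrX1 yp subrr mulr0.
Qed.

Lemma csp_gen n p (T : finType) (a : nat -> T -> T) : prime p -> (p %| n)%N ->
  Zn_action n a ->
  (forall i, (0 < i)%N -> #|fixpts a i| = if (p %| i)%N then p else 0%N) ->
  CSP n a ('Phi_p \Po 'X^(n %/ p)).
Proof.
move=> pp pn [a0 _ an] H w pw i lti.
rewrite (@eval_key n p w i pp pn pw).
have n0 := prim_order_gt0 pw.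
case: (posnP i) => [->|i0]; last by rewrite H.
have -> : fixpts a 0 = fixpts a n by apply/setP => x; rewrite !inE a0 an eqxx.
by rewrite H // pn dvdn0.
Qed.

Lemma gcd_card (X : nat -> finType) p i : prime p -> #|X 1%N| = 0%N ->
  (forall p : nat, prime p -> #|X p| = p) ->
  #|X (gcdn p i)| = if (p %| i)%N then p else 0%N.
Proof.
move=> pp HX1 HXp; case: ifP => h.
  by rewrite (gcdn_idPl h) HXp.
have /eqP -> : coprime p i by rewrite prime_coprime // h.
exact: HX1.
Qed.

Lemma csp_one (T : finType) (a : nat -> T -> T) : #|T| = 0%N ->
  CSP 1 a ('X - 1).
Proof.
move=> T0 w pw [|i] // _.
rewrite expr0 rmorphB /= map_polyX rmorph1 !hornerE subrr.
apply/eqP; rewrite pnatr_eq0 -leqn0 -T0; exact: max_card.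
Qed.

Theorem corollary3
  (X : nat -> finType) (act : forall n : nat, nat -> X n -> X n)
  (Hact : forall n : nat, (0 < n)%N -> Zn_action n (act n))
  (HX1 : #|X 1%N| = 0%N)
  (HXp : forall p : nat, prime p -> #|X p| = p) :
  ((forall n i : nat, (1 < n)%N -> (0 < i)%N ->
      #|fixpts (act n) i| = #|X (gcdn (s_ n) i)|) ->
   forall n : nat, (0 < n)%N -> CSP n (act n) (S_poly n))
  /\
  ((forall n i : nat, (1 < n)%N -> (0 < i)%N ->
      #|fixpts (act n) i| = #|X (gcdn (g_ n) i)|) ->
   forall n : nat, (0 < n)%N -> CSP n (act n) (G_poly n)).
Proof.
split => Hf n n0.
  rewrite /S_poly; case: ifP => n1.
    have -> : n = 1%N by apply/eqP; rewrite eqn_leq n1 n0.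
    exact: csp_one.
  have n1' : (1 < n)%N by rewrite ltnNge n1.
  have pp := pdiv_prime n1'.
  have -> : s_ n = pdiv n by rewrite /s_ n1.
  apply: csp_gen => //; first exact: pdiv_dvd.
    exact: Hact.
  move=> i i0; rewrite Hf // /s_ n1; exact: gcd_card.
rewrite /G_poly; case: ifP => n1.
  have -> : n = 1%N by apply/eqP; rewrite eqn_leq n1 n0.
  exact: csp_one.
have n1' : (1 < n)%N by rewrite ltnNge n1.
have pp := max_pdiv_prime n1'.
have -> : g_ n = max_pdiv n by rewrite /g_ n1.
apply: csp_gen => //; first exact: max_pdiv_dvd.
  exact: Hact.
move=> i i0; rewrite Hf // /g_ n1; exact: gcd_card.
Qed.
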